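(* Let $q=p^h$ be a prime power and let $G$ be a finite group whose irreducible complex character degrees, with multiplicity, are $1$ ($q-1$ times), $q-1$ (once), and $q$ ($q-1$ times). If $N$ is a non-identity normal subgroup of $G$ such that $G/N$ is nonabelian, then the irreducible character degrees of $G/N$ are $1$ ($q-1$ times) and $q-1$ (once). Moreover, $(G/N)'$ is an elementary abelian $p$-group. *)

(* Defs.v *)
From mathcomp Require Import all_boot all_algebra all_fingroup all_solvable all_field all_character.
Set Implicit Arguments. Unset Strict Implicit. Unset Printing Implicit Defensive.
Import GRing.Theory Num.Theory.
Local Open Scope ring_scope.

Definition irr_degrees (gT : finGroupType) (G : {group gT}) : seq algC :=
  [seq 'chi[G]_i 1%g | i : Iirr G].

(* Main.v *)
Require Import Defs.
From mathcomp Require Import all_boot all_algebra all_fingroup all_solvable all_field all_character.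
From mathcomp Require Import zify.
Import GRing.Theory Num.Theory.
Local Open Scope ring_scope.

Lemma count_irr_deg (gT : finGroupType) (G : {group gT}) (P : pred algC) :
  count P (irr_degrees G) = #|[pred i : Iirr G | P ('chi_i 1%g)]|.
Proof.
rewrite /irr_degrees /image_mem count_map cardE /enum_mem size_filter.
rewrite count_filter; apply: eq_count => i; by rewrite !inE andbT.
Qed.

Lemma mask_nseq (T : Type) (m : bitseq) n (x : T) :
  mask m (nseq n x) = nseq (count id (take n m)) x.
Proof.
elim: n m => [|n IH] [|[] m] //=; by rewrite IH.
Qed.

Lemma count_take_le m n : (count id (take n m) <= n)%N.
Proof. apply: leq_trans (count_size _ _) _; rewrite size_take_min; exact: geq_minl. Qed.

Lemma subseq_nseq3 (T : eqType) (s : seq T) n1 n2 n3 x1 x2 x3 :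
  subseq s (nseq n1 x1 ++ nseq n2 x2 ++ nseq n3 x3) ->
  exists a b c, [/\ (a <= n1)%N, (b <= n2)%N, (c <= n3)%N &
     s = nseq a x1 ++ nseq b x2 ++ nseq c x3].
Proof.
case/subseqP=> m; rewrite !size_cat !size_nseq => sz ->.
rewrite -(cat_take_drop n1 m) mask_cat; last by rewrite size_take_min size_nseq; lia.
rewrite -(cat_take_drop n2 (drop n1 m)) mask_cat; last by rewrite size_take_min size_drop size_nseq; lia.
rewrite !mask_nseq.
by exists (count id (take n1 (take n1 m))), (count id (take n2 (take n2 (drop n1 m)))), (count id (take n3 (drop n2 (drop n1 m)))); split => //; exact: count_take_le.
Qed.

Section Arith.
Local Open Scope nat_scope.
Lemma arith k a b c n :
 (a <= k.+1) -> (b <= 1) -> (c <= k.+1) ->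
 n = a + b * k.+1 ^ 2 + c * k.+2 ^ 2 ->
 n != k.+1 + k.+1 ^ 2 + k.+1 * k.+2 ^ 2 ->
 (0 < c -> k.+2 %| n) -> (0 < b -> k.+1 %| n) ->
 (0 < a) || ((0 < b) && (k == 0)) ->
 (0 < c) || ((0 < b) && (k != 0)) ->
 [/\ a = k.+1, b = 1 & c = 0].
Proof.
move=> ha hb hc hn hne dc db h1 h2.
have [c0|cpos] := posnP c.
  move: h2; rewrite c0 /= => /andP [bpos k0].
  have b1 : b = 1 by lia.
  have a0 : 0 < a by move: h1; rewrite (negbTE k0); case/orP => //; rewrite andbF.
  have := db bpos; rewrite hn b1 c0 mul1n mul0n addn0 dvdn_addl ?dvdn_exp //.
  move/(dvdn_leq a0) => ?; split => //; lia.
have := dc cpos.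
have [b0|bpos] := posnP b.
  rewrite hn b0 mul0n addn0 dvdn_addl; last by rewrite dvdn_mull // dvdn_exp.
  move: h1; rewrite b0 /= orbF => a0 /(dvdn_leq a0); lia.
have b1 : b = 1 by lia.
have -> : n = (a + 1) + k.+2 * (k + c * k.+2) by rewrite hn b1; lia.
rewrite dvdn_addl; last exact: dvdn_mulr.
move/dvdn_leq; rewrite addn1 => /(_ isT) ha1.
have aa : a = k.+1 by lia.
exfalso; move: hne; rewrite hn aa b1 mul1n => /negP; apply.
have := db bpos; rewrite hn aa b1 mul1n -addnA dvdn_addr // dvdn_addr ?dvdn_exp //.
rewrite Gauss_dvdl ?coprimeXr ?coprimenS // => /(dvdn_leq cpos) cc.
have -> : c = k.+1 by lia.
by rewrite addnA.
Qed.
End Arith.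


Lemma quo_count_le (gT : finGroupType) (G N : {group gT}) x : (N <| G)%g ->
  (count_mem x (irr_degrees (G / N)%G) <= count_mem x (irr_degrees G))%N.
Proof.
move=> nsNG; rewrite !count_irr_deg.
have inj : injective (@mod_Iirr _ G N) := can_inj (mod_IirrK nsNG).
rewrite -(card_image inj); apply: subset_leq_card; apply/subsetP => j /imageP [i Hi ->].
by move: Hi; rewrite !inE mod_IirrE // cfMod1.
Qed.

Lemma sum_sq_nseq (n : nat) (x : algC) : \sum_(u <- nseq n x) u ^+ 2 = x ^+ 2 *+ n.
Proof. by elim: n => [|n IH]; rewrite ?big_nil // big_cons IH mulrS. Qed.

Lemma irr_sum_deg (gT : finGroupType) (G : {group gT}) :
  \sum_(u <- irr_degrees G) u ^+ 2 = #|G|%:R.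
Proof. by rewrite /irr_degrees /image_mem big_map big_enum /= -irr_sum_square. Qed.

Lemma deg_dvd (gT : finGroupType) (G : {group gT}) (m : nat) :
  m%:R \in irr_degrees G -> (m %| #|G|)%N.
Proof. by case/imageP => i _ e; have := dvd_irr1_cardG i; rewrite -e dvdC_nat. Qed.

Lemma one_in_deg (gT : finGroupType) (G : {group gT}) : 1 \in irr_degrees G.
Proof. by apply/imageP; exists 0 => //; rewrite irr0 cfun11. Qed.

Lemma nonab_deg (gT : finGroupType) (G : {group gT}) : ~~ abelian G ->
  exists2 x, x \in irr_degrees G & x != 1.
Proof.
move=> nab; case/boolP: [exists i : Iirr G, 'chi_i 1%g != 1].
  by case/existsP => i ne; exists ('chi_i 1%g) => //; apply/imageP; exists i.
rewrite negb_exists => /forallP all1; case/negP: nab; apply/char_abelianP => i.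
by rewrite qualifE /= irr_char; move: (all1 i); rewrite negbK.
Qed.

Lemma natsq (m x : nat) : (x%:R : algC) ^+ 2 *+ m = (m * x ^ 2)%:R.
Proof. by rewrite -natrX -mulr_natl -natrM. Qed.

Lemma natsq1 (m : nat) : (1 : algC) ^+ 2 *+ m = (m * 1 ^ 2)%:R.
Proof. by rewrite expr1n exp1n muln1. Qed.

Lemma part1 (gT : finGroupType) (G N : {group gT}) k :
  perm_eq (irr_degrees G) (nseq k.+1 1 ++ [:: k.+1%:R] ++ nseq k.+1 k.+2%:R) ->
  (N <| G)%g -> (N :!=: 1)%g -> ~~ abelian (G / N)%g ->
  perm_eq (irr_degrees (G / N)%G) (nseq k.+1 1 ++ [:: k.+1%:R]) /\ k != 0%N.
Proof.
move=> pG nsNG ntN nab; set D := irr_degrees (G / N)%G.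
set L := nseq k.+1 1 ++ _ in pG.
have cnt x : (count_mem x D <= count_mem x L)%N.
  by rewrite -(seq.permP pG); exact: quo_count_le.
have [s sub pe] := (count_subseqP D L).1 cnt.
have [a [b [c [ha hb hc es]]]] := @subseq_nseq3 _ s k.+1 1 k.+1 1 k.+1%:R k.+2%:R sub.
rewrite {s sub}es in pe.
have nG : #|G| = (k.+1 * 1 ^ 2 + 1 * k.+1 ^ 2 + k.+1 * k.+2 ^ 2)%N.
  apply/eqP; rewrite -(eqr_nat algC) -irr_sum_deg (perm_big _ pG) !big_cat.
  rewrite -[[:: k.+1%:R]]/(nseq 1 k.+1%:R) !sum_sq_nseq natsq1 !natsq !natrD -addrA.
  by [].
have nH : #|(G / N)%g| = (a * 1 ^ 2 + b * k.+1 ^ 2 + c * k.+2 ^ 2)%N.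
  apply/eqP; rewrite -(eqr_nat algC) -irr_sum_deg (perm_big _ pe) !big_cat.
  by rewrite !sum_sq_nseq natsq1 !natsq !natrD -addrA.
have memD x : (x \in D) = (x \in nseq a 1 ++ nseq b k.+1%:R ++ nseq c k.+2%:R).
  exact: perm_mem.
have neq : #|(G / N)%g| != #|G|.
  rewrite card_quotient ?normal_norm // -(Lagrange (normal_sub nsNG)).
  rewrite -{1}[#|G : N|%g]mul1n eqn_mul2r negb_or.
  by rewrite -lt0n indexg_gt0 /= eq_sym neq_ltn cardG_gt1 ntN orbT.
have h1 : (0 < a)%N || (0 < b)%N && (k == 0)%N.
  move: (@one_in_deg _ (G / N)%G); rewrite -/D memD !mem_cat !mem_nseq.
  rewrite eqxx andbT ![1 == _]eq_sym !pnatr_eq1 /= andbF orbF.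
  done.
have h2 : (0 < c)%N || (0 < b)%N && (k != 0)%N.
  case: (@nonab_deg _ (G / N)%G nab) => x; rewrite -/D memD !mem_cat !mem_nseq.
  case/or3P => /andP [pos /eqP ->]; rewrite ?eqxx // ?pos ?orbT //.
  by rewrite pnatr_eq1 /= => ->; rewrite orbT.
have dc : (0 < c)%N -> (k.+2 %| #|(G / N)%g|)%N.
  by move=> cpos; apply: deg_dvd; rewrite -/D memD !mem_cat !mem_nseq cpos eqxx !orbT.
have db : (0 < b)%N -> (k.+1 %| #|(G / N)%g|)%N.
  by move=> bpos; apply: deg_dvd; rewrite -/D memD !mem_cat !mem_nseq bpos eqxx !orbT.
rewrite muln1 in nH; rewrite !muln1 mul1n in nG.
rewrite nG in neq.
have [ea eb ec] := @arith k a b c _ ha hb hc nH neq dc db h1 h2.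
split; last by move: h2; rewrite ec eb.
rewrite ea eb ec in pe.
by rewrite (_ : nseq 1 k.+1%:R ++ nseq 0 k.+2%:R = [:: k.+1%:R] :> seq algC) in pe.
Qed.

Section GroupPart.
Local Open Scope group_scope.
Lemma abelem_of_trans (rT : finGroupType) (H K : {group rT}) p :
  prime p -> p.-group K -> K :!=: 1 -> K <| H ->
  (forall g, g \in K :\ 1%g -> g ^: H = K :\ 1%g) -> p.-abelem K.
Proof.
move=> pp pK ntK nKH tr.
have [_ pdK _] := pgroup_pdiv pK ntK.
have [x xK ox] := Cauchy pp pdK.
have xK1 : x \in K :\ 1%g.
  rewrite !inE xK andbT; apply/eqP => x1; move: ox; rewrite x1 order1 => p1; by rewrite -p1 in pp.
have inCl g : g \in K :\ 1%g -> exists2 w, w \in H & g = (x ^ w)%g.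
  move=> gK; have : g \in x ^: H by rewrite tr.
  case/imsetP => w wH ->; by exists w.
rewrite abelemE //; apply/andP; split.
  have ntZ : 'Z(K) != 1%g.
    apply: contra ntK => /eqP Z1; apply/eqP; exact: trivg_center_pgroup pK Z1.
  have [z zZ z1] := trivgPn _ ntZ.
  have zK1 : z \in K :\ 1%g by rewrite !inE z1 (subsetP (center_sub K)).
  have nZH : 'Z(K) <| H := char_normal_trans (center_char K) nKH.
  apply/center_idP; apply/eqP; rewrite eqEsubset center_sub /=; apply/subsetP => g gK.
  have [->|g1] := eqVneq g 1%g; first exact: group1.
  have : g \in z ^: H by rewrite tr // !inE g1.
  case/imsetP => w wH ->; by rewrite memJ_norm // (subsetP (normal_norm nZH)).
apply/exponentP => g gK.
have [->|g1] := eqVneq g 1%g; first exact: expg1n.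
have [w wH ->] : exists2 w, w \in H & g = (x ^ w)%g by apply: inCl; rewrite !inE g1.
by rewrite -ox -(orderJ x w) expg_order.
Qed.
End GroupPart.

Lemma linE (gT : finGroupType) (G : {group gT}) (i : Iirr G) :
  ('chi_i \is a linear_char) = ('chi_i 1%g == 1).
Proof. by rewrite qualifE /= irr_char. Qed.

Lemma part2 (rT : finGroupType) (H : {group rT}) p h k :
  prime p -> (p ^ h)%N = k.+2 -> k != 0%N ->
  perm_eq (irr_degrees H) (nseq k.+1 1 ++ [:: k.+1%:R]) -> (p.-abelem H^`(1))%g.
Proof.
move=> pp qE k0 pD; set D := irr_degrees H in pD.
set r : algC := k.+1%:R.
have r1 : r != 1 by rewrite pnatr_eq1.
have r0 : r != 0 by rewrite pnatr_eq0.
have nH : #|H| = (k.+2 * k.+1)%N.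
  have -> : (k.+2 * k.+1 = k.+1 * 1 ^ 2 + 1 * k.+1 ^ 2)%N by lia.
  apply/eqP; rewrite -(eqr_nat algC) -irr_sum_deg (perm_big _ pD) big_cat.
  by rewrite -[[:: r]]/(nseq 1 r) !sum_sq_nseq natsq1 natsq natrD.
have cntP (P : pred algC) : #|[pred i : Iirr H | P ('chi_i 1%g)]| = count P (nseq k.+1 1 ++ [:: r]).
  by rewrite -count_irr_deg (seq.permP pD).
have nlin : #|[pred i : Iirr H | 'chi_i \is a linear_char]| = k.+1.
  rewrite (eq_card (B := [pred i : Iirr H | pred1 1 ('chi_i 1%g)])); last by move=> i; rewrite !inE linE.
  by rewrite cntP count_cat count_nseq /= eqxx (negbTE r1) /=; lia.
have nirr : #|Iirr H| = k.+2.
  rewrite (eq_card (B := [pred i : Iirr H | predT ('chi_i 1%g)])) //.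
  by rewrite cntP count_predT size_cat size_nseq addn1.
have nder : #|H^`(1)%g| = k.+2.
  have := Lagrange (der_sub 1 H); rewrite -card_lin_irr nlin nH.
  by move/eqP; rewrite eqn_mul2r /= => /eqP.
have [i0 Hi0] : exists i0, [pred i : Iirr H | 'chi_i 1%g == r] =i pred1 i0.
  apply/card1P; rewrite (eq_card (B := [pred i : Iirr H | pred1 r ('chi_i 1%g)])) //.
  by rewrite cntP count_cat count_nseq /= eqxx [1 == r]eq_sym (negbTE r1).
have deg1 i : i != i0 -> 'chi_i 1%g = 1.
  move=> ne; have : 'chi_i 1%g \in D by apply/imageP; exists i.
  rewrite (perm_mem pD) mem_cat mem_nseq mem_seq1 /= => /orP [/eqP -> // | /eqP e].
  by move: (Hi0 i); rewrite !inE e eqxx (negbTE ne).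
have ri0 : 'chi_i0 1%g = r by move: (Hi0 i0); rewrite !inE eqxx => /eqP.
have chiK i g : i != i0 -> g \in H^`(1)%g -> 'chi_i g = 1.
  move=> ne gK; rewrite cfker1 ?deg1 //; apply: (subsetP _ g gK).
  by rewrite -lin_irr_der1 linE deg1.
have nC1 : #|[pred i : Iirr H | i != i0]| = k.+1 by rewrite cardC1 nirr.
have cls g : g \in (H^`(1) :\ 1)%g -> (g ^: H)%g = (H^`(1) :\ 1)%g.
  case/setD1P => g1 gK.
  have gH : g \in H := subsetP (der_sub 1 H) g gK.
  have so1 := second_orthogonality_relation g (group1 H).
  rewrite class1G inE (negbTE g1) mulr0n (bigD1 i0) //= ri0 conjC_nat in so1.
  rewrite (eq_bigr (fun _ => 1)) in so1; last by move=> i ne; rewrite chiK // deg1 // conjC1 mulr1.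
  rewrite sumr_const nC1 in so1.
  have chig : 'chi_i0 g = -1.
    apply/eqP; rewrite -addr_eq0; apply/eqP.
    by apply: (mulIf r0); rewrite mul0r mulrDl mul1r.
  have so2 := second_orthogonality_relation g gH.
  rewrite class_refl mulr1n (bigD1 i0) //= chig in so2.
  rewrite (eq_bigr (fun _ => 1)) in so2; last by move=> i ne; rewrite chiK // conjC1 mulr1.
  rewrite sumr_const nC1 rmorphN1 mulrNN mulr1 in so2.
  have nC : #|'C_H[g]%g| = k.+2.
    by apply/eqP; rewrite -(eqr_nat algC) -so2 addrC natr1.
  have ncl : #|(g ^: H)%g| = k.+1.
    have := Lagrange (subsetIl H 'C[g]%g); rewrite nC nH index_cent1.
    by move/eqP; rewrite eqn_mul2l /= => /eqP.
  apply/eqP; rewrite eqEcard; apply/andP; split.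
    apply/subsetP => y /imsetP [w wH ->].
    by rewrite !inE conjg_eq1 g1 /= memJ_norm // (subsetP (normal_norm (der_normal 1 H))).
  by rewrite ncl; move: nder; rewrite (cardsD1 1%g) group1 add1n => [[->]].
apply: (@abelem_of_trans _ H _ p pp _ _ (der_normal 1 H) cls).
  by rewrite /pgroup nder -qE pnatX pnat_id.
by rewrite -cardG_gt1 nder.
Qed.

Theorem mainTheorem7 (p h : nat) (gT : finGroupType) (G N : {group gT}) :
  prime p -> (0 < h)%N ->
  perm_eq (irr_degrees G)
    (nseq (p ^ h)%N.-1 1 ++ [:: ((p ^ h)%N.-1)%:R] ++ nseq (p ^ h)%N.-1 (p ^ h)%N%:R) ->
  (N <| G)%g -> (N :!=: 1)%g -> ~~ abelian (G / N)%g ->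
  perm_eq (irr_degrees (G / N)%G) (nseq (p ^ h)%N.-1 1 ++ [:: ((p ^ h)%N.-1)%:R])
  /\ (p.-abelem (G / N)^`(1))%g.
Proof.
move=> pp h0 pG nsNG ntN nab.
have q2 : (2 <= p ^ h)%N.
  apply: leq_trans (prime_gt1 pp) _; rewrite -{1}(expn1 p) leq_pexp2l //; exact: prime_gt0.
have [k qE] : exists k, (p ^ h)%N = k.+2 by exists (p ^ h - 2)%N; lia.
rewrite qE in pG *.
have [pH k0] := @part1 _ G N k pG nsNG ntN nab.
by split => //; apply: (@part2 _ _ p h k pp qE k0 pH).
Qed.
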